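(* For every $n\ge1$: $F^{\mathrm{(per)}}_{2n}(-1)=0$ if $n$ is even, and $F^{\mathrm{(per)}}_{2n}(-1)=-\dfrac{\mathrm{AV}_n^2}{\mathrm{A}_n}$ if $n$ is odd.
   Context: $F^{\mathrm{(per)}}_{2n}(x) = \sum_{k=1}^n \binom{n+k-2}{k-1}\frac{(2n-1)!\,(2n-k-1)! }{(3 n-2)!\,(n-k)!}x^k$ (boundary loop generating function of the periodic Temperley–Lieb loop model at loop weight 1, size $2n$). $\mathrm{A}_n=\prod_{j=0}^{n-1}\frac{(3j+1)!}{(n+j)!}$ (number of $n\times n$ alternating sign matrices), and for $m\ge0$, $\mathrm{AV}_{2m+1}=\prod_{j=0}^{m-1}(3j+2)\frac{(6j+3)!\,(2j+1)!}{(4j+3)!\,(4j+2)!}$ (number of vertically symmetric alternating sign matrices of size $2m+1$). *)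

(* Defs.v *)
From HB Require Import structures.
From mathcomp Require Import all_boot all_order all_algebra.
Set Implicit Arguments. Unset Strict Implicit. Unset Printing Implicit Defensive.
Import Order.TTheory GRing.Theory Num.Theory.
Local Open Scope ring_scope.

Definition Fper (n : nat) (x : rat) : rat :=
  \sum_(1 <= k < n.+1)
    ('C(n + k - 2, k - 1))%:R
    * (((2 * n - 1)`! * (2 * n - k - 1)`!)%:R
       / (((3 * n - 2)`! * (n - k)`!)%:R))
    * x ^+ k.

Definition ASM (n : nat) : rat :=
  \prod_(j < n) (((3 * j + 1)`!)%:R / ((n + j)`!)%:R).

Definition AVodd (m : nat) : rat :=
  \prod_(j < m) ((3 * j + 2)%:R
     * (((6 * j + 3)`! * (2 * j + 1)`!)%:R
        / (((4 * j + 3)`! * (4 * j + 2)`!)%:R))).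

(* AV_n for n odd, n = 2m+1 (only meaningful for odd n) *)
Definition AV (n : nat) : rat := AVodd n./2.

(* Main.v *)
Require Import Defs.
From HB Require Import structures.
From mathcomp Require Import all_boot all_order all_algebra.
From mathcomp Require Import ring lra zify.
Import Order.TTheory GRing.Theory Num.Theory.
Local Open Scope ring_scope.

Definition cc (n j : nat) : rat := ('C(n + j, j))%:R.
Definition aa (n j : nat) : rat := (-1) ^+ j * cc n j.
Definition conv (f g : nat -> rat) (N : nat) : rat :=
  \sum_(i < N.+1) f i * g (N - i)%N.
Definition sh (f : nat -> rat) (j : nat) : rat :=
  if j is j'.+1 then f j' else 0.
Definition TT n N := conv (aa n) (cc n) N.

Lemma conv_shl f g N : conv (sh f) g N.+1 = conv f g N.
Proof.
rewrite /conv big_ord_recl /= mul0r add0r.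
by apply: eq_bigr => i _.
Qed.

Lemma conv_shr f g N : conv f (sh g) N.+1 = conv f g N.
Proof.
rewrite /conv big_ord_recr /= subnn mulr0 addr0.
apply: eq_bigr => i _ /=.
by rewrite subSn ?leq_ord //.
Qed.

Lemma conv_ext f f' g g' N : (forall j, f j = f' j) -> (forall j, g j = g' j) ->
  conv f g N = conv f' g' N.
Proof. by move=> hf hg; apply: eq_bigr => i _; rewrite hf hg. Qed.

Lemma conv_addl f f' g N : conv (fun j => f j + f' j) g N = conv f g N + conv f' g N.
Proof. by rewrite /conv -big_split /=; apply: eq_bigr => i _; rewrite mulrDl. Qed.

Lemma conv_subr f g g' N : conv f (fun j => g j - g' j) N = conv f g N - conv f g' N.
Proof. by rewrite /conv -sumrB /=; apply: eq_bigr => i _; rewrite mulrBr. Qed.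

Lemma cc_pascal n j : cc n.+1 j.+1 = cc n j.+1 + cc n.+1 j.
Proof.
rewrite /cc addnS binS -natrD; congr (_%:R); congr (_ + _).
by rewrite addSnnS.
Qed.

Lemma cc_rec n j : cc n j = cc n.+1 j - sh (cc n.+1) j.
Proof.
case: j => [|j] /=; first by rewrite /cc !addn0 !bin0 subr0.
by rewrite cc_pascal addrK.
Qed.

Lemma aa_rec n j : aa n j = aa n.+1 j + sh (aa n.+1) j.
Proof.
case: j => [|j] /=; first by rewrite /aa /cc !expr0 !addn0 !bin0 addr0.
rewrite /aa cc_pascal exprS; ring.
Qed.

Lemma TT_rec n M : TT n.+1 M.+2 = TT n M.+2 + TT n.+1 M.
Proof.
rewrite /TT (@conv_ext _ _ _ _ M.+2 (aa_rec n) (cc_rec n)) conv_subr !conv_addl.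
rewrite conv_shl !conv_shr conv_shl; ring.
Qed.

Lemma TT0 n : TT n 0 = 1.
Proof. by rewrite /TT /conv big_ord_recl big_ord0 /aa /cc /= !addn0 !bin0 !mulr1 addr0. Qed.

Lemma TT1 n : TT n 1 = 0.
Proof.
rewrite /TT /conv !big_ord_recl big_ord0 /aa /cc /= /bump /= !subn0 subnn !addn0 !bin0.
ring.
Qed.

Lemma TT_zero N : TT 0 N = if odd N then 0 else 1.
Proof.
have e : forall j, aa 0 j = (-1)^+j by move=> j; rewrite /aa /cc add0n binn mulr1.
have e2 : forall j, cc 0 j = 1 by move=> j; rewrite /cc add0n binn.
rewrite /TT (@conv_ext _ _ _ _ N e e2) /conv.
suff H : forall N, (\sum_(i < N.+1) (-1) ^+ i * 1 = if odd N then 0 else 1 :> rat) /\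
  (\sum_(i < N.+2) (-1) ^+ i * 1 = if odd N.+1 then 0 else 1 :> rat).
  by case: (H N).
elim=> [|M [IH1 IH2]].
  split; first by rewrite big_ord_recl big_ord0 expr0 mulr1 addr0.
  by rewrite !big_ord_recl big_ord0 /= /bump /=; ring.
split=> //.
rewrite big_ord_recr big_ord_recr IH1 /=.
case: (odd M); rewrite /= !mulr1 !exprS; ring.
Qed.

Lemma TT_closed n N : TT n N = if odd N then 0 else cc n N./2.
Proof.
elim: n N => [|n IHn] N.
  by rewrite TT_zero /cc add0n binn; case: (odd N).
suff H : forall N, (TT n.+1 N = if odd N then 0 else cc n.+1 N./2) /\
  (TT n.+1 N.+1 = if odd N.+1 then 0 else cc n.+1 N.+1./2).
  by case: (H N).
elim=> [|M [IH1 IH2]].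
  by rewrite TT0 TT1 /cc addn0 bin0.
split=> //.
rewrite TT_rec IHn IH1 /=.
case: (odd M) => /=; first by rewrite addr0.
by rewrite cc_pascal.
Qed.
Lemma fact_neq0 k : ((k`!)%:R : rat) != 0.
Proof. by rewrite pnatr_eq0 -lt0n fact_gt0. Qed.

Lemma Fper_TT n : Fper n.+1 (-1) =
  - (((2*n+1)`! * n`!)%:R / ((3*n+1)`!)%:R) * TT n n.
Proof.
rewrite /Fper big_add1 /= big_mkord /TT /conv mulr_sumr.
apply: eq_bigr => [[j hj]] _ /=.
have hj' : (j <= n)%N by [].
have -> : (n.+1 + j.+1 - 2 = n + j)%N by lia.
have -> : (j.+1 - 1 = j)%N by lia.
have -> : (2 * n.+1 - 1 = 2*n+1)%N by lia.
have -> : (2 * n.+1 - j.+1 - 1 = 2*n - j)%N by lia.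
have -> : (3 * n.+1 - 2 = 3*n+1)%N by lia.
have -> : (n.+1 - j.+1 = n - j)%N by lia.
have hB : (2*n - j)`! = ('C(n+(n-j), n-j) * ((n-j)`! * n`!))%N.
  have := bin_fact (leq_addl n (n-j)); rewrite addnK => ->.
  by congr (_`!); lia.
rewrite hB /aa /cc !natrM exprS.
have h1 := fact_neq0 (n - j). have h2 := fact_neq0 (3*n+1).
field.
by rewrite h1 h2.
Qed.
Definition nu n : rat := \prod_(j < n) ((3 * j + 1)`!)%:R.
Definition de n : rat := \prod_(j < n) ((n + j)`!)%:R.

Lemma ASM_nd n : ASM n = nu n / de n.
Proof. by rewrite /ASM big_split /= prodfV. Qed.

Lemma de_neq0 n : de n != 0.
Proof. by apply/prodf_neq0 => i _; apply: fact_neq0. Qed.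

Lemma de_S n : de n.+1 * (n`!)%:R = de n * ((2*n)`!)%:R * ((2*n+1)`!)%:R.
Proof.
have E1 : \prod_(j < n.+1) ((n + j)`!)%:R = de n * ((2*n)`!)%:R :> rat.
  by rewrite big_ord_recr /= mul2n -addnn.
have E2 : \prod_(j < n.+1) ((n + j)`!)%:R =
    (n`!)%:R * \prod_(j < n) ((n.+1 + j)`!)%:R :> rat.
  by rewrite big_ord_recl /= addn0; congr (_ * _); apply: eq_bigr => i _; rewrite addnS addSn.
rewrite /de big_ord_recr /= -/(de n).
have -> : (n.+1 + n = 2*n+1)%N by lia.
rewrite -mulrA (mulrC ((2*n+1)`!)%:R) mulrA; congr (_ * _).
by rewrite mulrC -E2 E1.
Qed.

Lemma ASM_S n : ASM n.+1 =
  ASM n * (((3*n+1)`!)%:R * (n`!)%:R / (((2*n)`!)%:R * ((2*n+1)`!)%:R)).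
Proof.
rewrite !ASM_nd /nu big_ord_recr /= -/(nu n).
have h := de_S n.
have hd := de_neq0 n. have hd1 := de_neq0 n.+1.
have h1 := fact_neq0 n. have h2 := fact_neq0 (2*n). have h3 := fact_neq0 (2*n+1).
have -> : de n.+1 = de n * ((2*n)`!)%:R * ((2*n+1)`!)%:R / (n`!)%:R.
  by rewrite -h mulfK.
field.
by rewrite hd h1 h2 h3.
Qed.

Lemma AVodd_S m : AVodd m.+1 = AVodd m * ((3 * m + 2)%:R
     * (((6 * m + 3)`! * (2 * m + 1)`!)%:R
        / (((4 * m + 3)`! * (4 * m + 2)`!)%:R))).
Proof. by rewrite /AVodd big_ord_recr. Qed.

Lemma ASM_neq0 n : ASM n != 0.
Proof. by apply/prodf_neq0 => i _; rewrite mulf_neq0 ?invr_eq0 ?fact_neq0. Qed.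
Lemma fD k d : (((k + d.+1)`!)%:R : rat) = (k + d.+1)%:R * ((k+d)`!)%:R.
Proof. by rewrite addnS factS natrM. Qed.

Lemma R_id m : AVodd m ^+ 2 / ASM (2* m+1) =
  ((4* m+1)`! * (3* m)`!)%:R / ((m`! * (6* m+1)`!)%:R).
Proof.
elim: m => [|m IH].
  by rewrite /AVodd /ASM !big_ord_recl !big_ord0.
have eA : ASM (2* m.+1+1) = ASM (2* m+1) *
  (((3*(2* m+1)+1)`!)%:R * ((2* m+1)`!)%:R / (((2*(2* m+1))`!)%:R * ((2*(2* m+1)+1)`!)%:R)) *
  (((3*(2* m+2)+1)`!)%:R * ((2* m+2)`!)%:R / (((2*(2* m+2))`!)%:R * ((2*(2* m+2)+1)`!)%:R)).
  have -> : (2* m.+1+1 = (2* m+1).+2)%N by lia.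
  rewrite ASM_S ASM_S.
  by have -> : ((2* m+1).+1 = 2* m+2)%N by lia.
have e : AVodd m ^+ 2 = ((4* m+1)`! * (3* m)`!)%:R / ((m`! * (6* m+1)`!)%:R) * ASM (2* m+1).
  by rewrite -IH divfK // ASM_neq0.
have hA := ASM_neq0 (2* m+1).
rewrite eA AVodd_S exprMn e.
have -> : (3*(2* m+1)+1 = 6* m+4)%N by lia.
have -> : (3*(2* m+2)+1 = 6* m+7)%N by lia.
have -> : (2*(2* m+1)+1 = 4* m+3)%N by lia.
have -> : (2*(2* m+2)+1 = 4* m+5)%N by lia.
have -> : (2*(2* m+1) = 4* m+2)%N by lia.
have -> : (2*(2* m+2) = 4* m+4)%N by lia.
have -> : (4* m.+1+1 = 4* m+5)%N by lia.
have -> : (3* m.+1 = 3* m+3)%N by lia.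
have -> : (6* m.+1+1 = 6* m+7)%N by lia.
have -> : (m.+1 = m+1)%N by lia.
rewrite !natrM !fD !addn0.
have h1 := fact_neq0 m. have h2 := fact_neq0 (2* m). have h3 := fact_neq0 (3* m).
have h4 := fact_neq0 (4* m). have h5 := fact_neq0 (6* m).
rewrite !natrD ?natrM.
have hm : (0:rat) <= m%:R by rewrite ler0n.
field.
rewrite h1 h2 h4 h5 hA /=.
repeat (apply/andP; split).
all: try done.
all: apply/eqP => H; lra.
Qed.

Theorem mainTheorem4 (n : nat) (hn : (1 <= n)%N) :
  (~~ odd n -> Fper n (-1) = 0) /\
  (odd n -> Fper n (-1) = - (AV n ^+ 2) / ASM n).
Proof.
case: n hn => [//|n] _.
rewrite Fper_TT TT_closed /=.
split.
  by rewrite negbK => ->; rewrite mulr0.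
move=> hev; rewrite (negbTE hev).
have hd := odd_double_half n; rewrite (negbTE hev) add0n in hd.
set m := n./2 in hd *.
have -> : n = (2 * m)%N by rewrite -hd -mul2n.
have -> : AV (2 * m).+1 = AVodd m.
  rewrite /AV; congr AVodd; rewrite -divn2; lia.
have -> : (2 * m).+1 = (2 * m + 1)%N by lia.
rewrite [in RHS]mulNr R_id.
have -> : (2 * (2 * m) + 1 = 4 * m + 1)%N by lia.
have -> : (3 * (2 * m) + 1 = 6 * m + 1)%N by lia.
have hC : ((3 * m)`! = 'C(2 * m + m, m) * (m`! * (2 * m)`!))%N.
  have := bin_fact (leq_addl (2 * m) m); rewrite addnK => ->.
  by congr (_`!); lia.
rewrite /cc hC !natrM.
have h1 := fact_neq0 m. have h2 := fact_neq0 (6 * m + 1).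
field.
by rewrite h1 h2.
Qed.
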